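(* Let $0\to A\to B\xrightarrow{p} C\to 0$ be a short exact sequence of modules with $A,B,C\in\mathcal G$, and let $B'$ be a strict subobject of $B$. Put $A'=A\cap B'$ and $C'=p(B')$. Then $A'$ is a strict subobject of $A$ and $C'$ is a strict subobject of $C$ (so also $B'/A'\cong C'$ embeds as a strict subobject of $B/A\cong C$).
   Context: Let $\Lambda$ be a finite dimensional algebra over a field and $\mathrm{mod}\text-\Lambda$ the category of finitely generated right $\Lambda$-modules. Fix a torsion class $\mathcal G\subseteq\mathrm{mod}\text-\Lambda$, i.e. a class of modules closed under isomorphisms, extensions and quotients. For $B\in\mathcal G$, a subobject of $B$ is a submodule of $B$ that lies in $\mathcal G$ (including $0$ and $B$). A subobject $A\subseteq B$ is a strict subobject if $A\cap B'\in\mathcal G$ for every subobject $B'$ of $B$. *)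

(* Defs.v *)
From HB Require Import structures.
From mathcomp Require Import all_boot all_order all_algebra all_field.
Set Implicit Arguments. Unset Strict Implicit. Unset Printing Implicit Defensive.
Import GRing.Theory.
Local Open Scope ring_scope.

(* Finitely generated right modules over a finite dimensional F-algebra Lam,
   represented concretely: a module of F-dimension n is a map
   act : Lam -> 'M[F]_n giving the right action on row vectors
   (v . a = v *m act a).  Module homomorphisms are matrices acting on the
   right of row vectors; submodules are row spaces of square matrices. *)

Record rmod (F : fieldType) (Lam : falgType F) := RMod {
  rdim : nat;
  ract : Lam -> 'M[F]_rdim }.

Definition is_rmod (F : fieldType) (Lam : falgType F) (M : rmod Lam) : Prop :=
  [/\ forall (k : F) (a b : Lam), ract M (k *: a + b) = k *: ract M a + ract M b,
      ract M 1 = 1%:M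
    & forall a b : Lam, ract M (a * b) = ract M a *m ract M b].

Definition is_hom (F : fieldType) (Lam : falgType F) (M N : rmod Lam)
  (f : 'M[F]_(rdim M, rdim N)) : Prop :=
  forall a : Lam, ract M a *m f = f *m ract N a.

(* A torsion class: closed under isomorphisms and quotients (i.e. images of
   surjective homomorphisms) and under extensions. *)
Definition torsion_class (F : fieldType) (Lam : falgType F)
  (G : rmod Lam -> Prop) : Prop :=
  (forall (M N : rmod Lam) (f : 'M[F]_(rdim M, rdim N)),
      is_rmod M -> is_rmod N -> is_hom f -> row_full f -> G M -> G N) /\
  (forall (K M N : rmod Lam) (f : 'M[F]_(rdim K, rdim M))
          (g : 'M[F]_(rdim M, rdim N)),
      is_rmod K -> is_rmod M -> is_rmod N -> is_hom f -> is_hom g ->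
      row_free f -> row_full g -> (f == kermx g)%MS ->
      G K -> G N -> G M).

Definition is_submod (F : fieldType) (Lam : falgType F) (M : rmod Lam)
  (U : 'M[F]_(rdim M)) : Prop :=
  forall a : Lam, (U *m ract M a <= U)%MS.

Definition sub_in (F : fieldType) (Lam : falgType F) (G : rmod Lam -> Prop)
  (M : rmod Lam) (U : 'M[F]_(rdim M)) : Prop :=
  exists N : rmod Lam, [/\ is_rmod N, G N &
    exists f : 'M[F]_(rdim N, rdim M), [/\ is_hom f, row_free f & (f == U)%MS]].

Definition subobject (F : fieldType) (Lam : falgType F) (G : rmod Lam -> Prop)
  (M : rmod Lam) (U : 'M[F]_(rdim M)) : Prop :=
  is_submod U /\ sub_in G U.

Definition strict_subobject (F : fieldType) (Lam : falgType F)
  (G : rmod Lam -> Prop) (M : rmod Lam) (U : 'M[F]_(rdim M)) : Prop :=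
  subobject G U /\
  forall U' : 'M[F]_(rdim M), subobject G U' -> sub_in G (U :&: U')%MS.

Definition preim_mx (F : fieldType) (m n : nat) (f : 'M[F]_(m, n))
  (V : 'M[F]_n) : 'M[F]_m := kermx (f *m cokermx V).

(* Main.v *)
Require Import Defs.
From HB Require Import structures.
From mathcomp Require Import all_boot all_order all_algebra all_field.
Set Implicit Arguments. Unset Strict Implicit. Unset Printing Implicit Defensive.
Import GRing.Theory.
Local Open Scope ring_scope.

Section Aux.
Variables (F : fieldType) (Lam : falgType F).

Definition subrmod (M : rmod Lam) (U : 'M[F]_(rdim M)) : rmod Lam :=
  @RMod F Lam (\rank U)
    (fun a => row_base U *m ract M a *m pinvmx (row_base U)).

Lemma subrmod_hom (M : rmod Lam) (U : 'M[F]_(rdim M)) :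
  is_submod U -> @is_hom F Lam (subrmod U) M (row_base U).
Proof.
move=> sU a /=; rewrite mulmxKpV //.
rewrite eq_row_base; apply: submx_trans (sU a).
by apply: submxMr; rewrite eq_row_base.
Qed.

Lemma subrmod_rmod (M : rmod Lam) (U : 'M[F]_(rdim M)) :
  is_rmod M -> is_submod U -> is_rmod (subrmod U).
Proof.
move=> [hl h1 hm] sU; have hr := subrmod_hom sU.
have fr := row_base_free U.
split=> /=.
- move=> k a b; rewrite hl mulmxDr mulmxDl -scalemxAr -scalemxAl //.
- apply: (row_free_inj fr); rewrite h1 mulmx1 mul1mx mulmxKpV //.
- move=> a b; apply: (row_free_inj fr).
  have hK : forall c, row_base U *m ract M c *m pinvmx (row_base U) *m row_base U
     = row_base U *m ract M c by move=> c; exact: (hr c).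
  rewrite hK hm.
  set X := row_base U *m ract M a *m pinvmx (row_base U).
  rewrite -[RHS]mulmxA (hK b) /X [RHS]mulmxA (hK a) mulmxA //.
Qed.

Lemma hom_factor (N M S : rmod Lam) (h : 'M[F]_(rdim N, rdim M))
  (r : 'M[F]_(rdim S, rdim M)) :
  is_hom h -> is_hom r -> row_free r -> (h <= r)%MS ->
  is_hom (h *m pinvmx r).
Proof.
move=> hh hr fr hle a; apply: (row_free_inj fr) => /=.
rewrite -mulmxA mulmxKpV // -[RHS]mulmxA hr [RHS]mulmxA mulmxKpV //.
Qed.

Lemma hom_comp (N M P : rmod Lam) (f : 'M[F]_(rdim N, rdim M))
  (g : 'M[F]_(rdim M, rdim P)) : is_hom f -> is_hom g -> is_hom (f *m g).
Proof. by move=> hf hg a; rewrite mulmxA hf -mulmxA hg mulmxA. Qed.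

Lemma sub_in_eq (G : rmod Lam -> Prop) (M : rmod Lam) (U V : 'M[F]_(rdim M)) :
  (U == V)%MS -> sub_in G U -> sub_in G V.
Proof.
move=> /eqmxP eUV [N [rN GN [f [hf ff /eqmxP efU]]]].
exists N; split=> //; exists f; split=> //; apply/eqmxP.
exact: eqmx_trans efU eUV.
Qed.

Lemma image_in (G : rmod Lam -> Prop) (hG : torsion_class G)
  (N M : rmod Lam) (h : 'M[F]_(rdim N, rdim M)) (U : 'M[F]_(rdim M)) :
  is_rmod N -> is_rmod M -> G N -> is_hom h -> (U == h)%MS -> sub_in G U.
Proof.
move=> rN rM GN hh /eqmxP eU.
have sU : is_submod U.
  move=> a; have le1 : (U *m ract M a <= h *m ract M a)%MS.
    by apply: submxMr; rewrite eU.
  by apply: submx_trans le1 _; rewrite -hh eU; exact: submxMl.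
have rS := subrmod_rmod rM sU.
have hr := subrmod_hom sU.
have fr := row_base_free U.
have hle : (h <= row_base U)%MS by rewrite eq_row_base eU.
exists (subrmod U); split=> //.
  apply: (hG.1 N (subrmod U) (h *m pinvmx (row_base U))) => //.
    exact: hom_factor.
  rewrite /row_full /= eqn_leq rank_leq_col /=.
  apply: leq_trans (mxrankM_maxl _ (row_base U)).
  by rewrite mulmxKpV // eU.
exists (row_base U); split=> //; apply/eqmxP; exact: eq_row_base.
Qed.


Lemma preim_mem m n k (i : 'M[F]_(m, n)) (U : 'M[F]_n) (X : 'M[F]_(k, m)) :
  (X <= preim_mx i U)%MS = (X *m i <= U)%MS.
Proof. by rewrite /preim_mx sub_kermx submxE mulmxA. Qed.

Lemma preim_submod (A B : rmod Lam) (i : 'M[F]_(rdim A, rdim B))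
  (U : 'M[F]_(rdim B)) : is_hom i -> is_submod U -> is_submod (preim_mx i U).
Proof.
move=> hi sU a; rewrite preim_mem -mulmxA hi mulmxA.
apply: submx_trans (submxMr _ _) (sU a).
by rewrite -preim_mem submx_refl.
Qed.


Lemma preim_in (G : rmod Lam -> Prop) (hG : torsion_class G)
  (A B C : rmod Lam)
  (hA : is_rmod A) (hB : is_rmod B) (hC : is_rmod C)
  (i : 'M[F]_(rdim A, rdim B)) (p : 'M[F]_(rdim B, rdim C))
  (hi : is_hom i) (hp : is_hom p)
  (i_inj : row_free i) (p_surj : row_full p) (exact : (i == kermx p)%MS)
  (GA : G A) (C'' : 'M[F]_(rdim C)) :
  is_submod C'' -> sub_in G C'' -> sub_in G (preim_mx p C'').
Proof.
move=> sC [N0 [rN0 GN0 [f0 [hf0 ff0 /eqmxP ef0]]]].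
set U := preim_mx p C''.
have sU : is_submod U := preim_submod hp sC.
set r := row_base U.
have hr : @is_hom F Lam (subrmod U) B r := subrmod_hom sU.
have fr : row_free r := row_base_free U.
have rS := subrmod_rmod hB sU.
have ip0 : i *m p = 0 by apply/sub_kermxP; case/andP: exact.
have ir : (i <= r)%MS by rewrite eq_row_base preim_mem ip0 sub0mx.
have rpf : (r *m p <= f0)%MS by rewrite ef0 -preim_mem eq_row_base.
exists (subrmod U); split => //; last first.
  by exists r; split => //; apply/eqmxP; exact: eq_row_base.
pose f := i *m pinvmx r.
pose g := r *m p *m pinvmx f0.
have hf : @is_hom F Lam A (subrmod U) f := hom_factor hi hr fr ir.
have hg : @is_hom F Lam (subrmod U) N0 g := hom_factor (hom_comp hr hp) hf0 ff0 rpf.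
have fr_eq : f *m r = i := mulmxKpV ir.
have gf_eq : g *m f0 = r *m p := mulmxKpV rpf.
apply: (hG.2 A (subrmod U) N0 f g) => //.
- rewrite /row_free eqn_leq rank_leq_row /=.
  apply: leq_trans (mxrankM_maxl f r); rewrite fr_eq.
  by move/eqP: i_inj => ->.
- rewrite /row_full eqn_leq rank_leq_col /=.
  apply: (@leq_trans (\rank f0)); first by rewrite (eqP ff0).
  apply: leq_trans (mxrankM_maxl g f0); rewrite gf_eq; apply: mxrankS.
  have Cp : (C'' <= p)%MS by exact: submx_full.
  rewrite ef0 -{1}(mulmxKpV Cp).
  by apply: submxMr; rewrite /r eq_row_base preim_mem mulmxKpV.
- apply/andP; split.
    by apply/sub_kermxP; rewrite /g (mulmxA f) (mulmxA f) fr_eq ip0 !mul0mx.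
  have K0 : kermx g *m g = 0 by apply/sub_kermxP.
  have Kr : kermx g *m r *m p = 0.
    by rewrite -mulmxA -gf_eq mulmxA K0 mul0mx.
  have : (kermx g *m r <= i)%MS.
    apply: submx_trans _ (proj2 (andP exact)); exact/sub_kermxP.
  by rewrite -fr_eq submxMfree.
Qed.

End Aux.

Theorem mainTheorem2 (F : fieldType) (Lam : falgType F)
  (G : rmod Lam -> Prop) (hG : torsion_class G)
  (A B C : rmod Lam)
  (hA : is_rmod A) (hB : is_rmod B) (hC : is_rmod C)
  (i : 'M[F]_(rdim A, rdim B)) (p : 'M[F]_(rdim B, rdim C))
  (hi : is_hom i) (hp : is_hom p)
  (i_inj : row_free i) (p_surj : row_full p) (exact : (i == kermx p)%MS)
  (GA : G A) (GB : G B) (GC : G C)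
  (B' : 'M[F]_(rdim B)) (hB' : strict_subobject G B') :
  strict_subobject G (preim_mx i B') /\ strict_subobject G (<<B' *m p>>%MS).
Proof.
have [[sB' [N [rN GN [f [hf ff /eqmxP ef]]]]] strictB] := hB'.
split.
  have sP := preim_submod hi sB'.
  have key : forall A'', subobject G A'' -> sub_in G (preim_mx i B' :&: A'')%MS.
    move=> A'' [sA'' [N0 [rN0 GN0 [f0 [hf0 ff0 /eqmxP ef0]]]]].
    have gAi : (<<A'' *m i>> :=: A'' *m i)%MS := genmxE _.
    have sAi : subobject G <<A'' *m i>>%MS.
      split.
        move=> a; rewrite gAi.
        apply: submx_trans (submxMr _ (_ : <<A'' *m i>> <= A'' *m i)%MS) _.
          by rewrite gAi.
        rewrite -mulmxA -hi mulmxA; exact: submxMr (sA'' a).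
      apply: (image_in hG rN0 hB GN0 (hom_comp hf0 hi)).
      apply/eqmxP; apply: eqmx_trans gAi _; apply: eqmx_sym; exact: eqmxMr.
    have [N1 [rN1 GN1 [f1 [hf1 ff1 /eqmxP ef1]]]] := strictB _ sAi.
    have capi : (B' :&: <<A'' *m i>> <= A'' *m i)%MS.
      by apply: submx_trans (capmxSr _ _) _; rewrite gAi.
    have f1i : (f1 <= i)%MS.
      by rewrite ef1; apply: submx_trans capi (submxMl _ _).
    apply: (image_in hG rN1 hA GN1 (hom_factor hf1 hi i_inj f1i)).
    apply/andP; split; rewrite -(submxMfree _ _ i_inj) mulmxKpV // ef1.
      rewrite sub_capmx; apply/andP; split.
        by rewrite -preim_mem capmxSl.
      by rewrite gAi; apply: submxMr; exact: capmxSr.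
    case/submxP: capi => D hD.
    rewrite hD mulmxA; apply: submxMr.
    by rewrite sub_capmx submxMl andbT preim_mem -mulmxA -hD capmxSl.
  have s1 : subobject G (1%:M : 'M[F]_(rdim A)).
    split; first by move=> a; exact: submx1.
    exists A; split=> //; exists 1%:M; split.
    - by move=> a; rewrite mul1mx mulmx1.
    - by rewrite row_free_unit unitmx1.
    - by rewrite !submx_refl.
  split=> //; split=> //.
  apply: sub_in_eq (key _ s1).
  by rewrite capmx1 !submx_refl.
have gE : (<<B' *m p>> :=: B' *m p)%MS := genmxE _.
split; first split.
- move=> a; rewrite gE.
  apply: submx_trans (submxMr _ (_ : <<B' *m p>> <= B' *m p)%MS) _.
    by rewrite gE.
  rewrite -mulmxA -hp mulmxA; exact: submxMr (sB' a).
- apply: (image_in hG rN hC GN (hom_comp hf hp)).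
  apply/eqmxP; apply: eqmx_trans gE _; apply: eqmx_sym; exact: eqmxMr.
move=> C'' [sC iC].
have iB := preim_in hG hA hB hC hi hp i_inj p_surj exact GA sC iC.
have sBB : subobject G (preim_mx p C'') := conj (preim_submod hp sC) iB.
have [N1 [rN1 GN1 [f1 [hf1 ff1 /eqmxP ef1]]]] := strictB _ sBB.
apply: (image_in hG rN1 hC GN1 (hom_comp hf1 hp)).
apply/eqmxP; apply: eqmx_trans _ (eqmx_sym (eqmxMr p ef1)); apply/eqmxP.
apply/andP; split.
  have : (<<B' *m p>> :&: C'' <= B' *m p)%MS.
    by apply: submx_trans (capmxSl _ _) _; rewrite gE.
  case/submxP => D hD.
  rewrite hD mulmxA; apply: submxMr.
  by rewrite sub_capmx submxMl /= preim_mem -mulmxA -hD capmxSr.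
rewrite sub_capmx gE; apply/andP; split.
  by apply: submxMr; exact: capmxSl.
by rewrite -preim_mem capmxSr.
Qed.
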